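(* Consider a neutral evolutionary model on $N$ sites given by a replacement rule $p$ satisfying the fixation assumption described in the context, with replacement probabilities $e_{ij}$, birth rates $b_i$, death rates $d_i$, total birth rate $B>0$, site-specific fixation probabilities $\rho_i$, overall fixation probability $\rho=\frac{1}{B}\sum_{i=1}^N d_i\rho_i$ and molecular clock rate $K=Nu\rho$ (for a mutation probability $u>0$ per reproduction). If the birth rates $b_i$ are constant over all sites $i=1,\ldots,N$, then $\rho\le 1/N$, and consequently $K\le u$, with equality if and only if the death rates $d_i$ are also constant over all sites.
   Context: There are $N$ sites $1,\ldots,N$, each always occupied by one individual of type M (mutant) or R (resident); a state is $\mathbf{s}\in\{\mathrm{M},\mathrm{R}\}^N$. A replacement event is a pair $(R,\alpha)$ with $R\subseteq\{1,\ldots,N\}$ and $\alpha:R\to\{1,\ldots,N\}$. A replacement rule is a probability distribution $p(R,\alpha)$ on replacement events, independent of the state. The evolutionary Markov chain: at each time-step an event $(R,\alpha)$ is drawn with probability $p(R,\alpha)$ and the new state is $s_i'=s_i$ if $i\notin R$, $s_i'=s_{\alpha(i)}$ if $i\in R$. Fixation assumption: there exist a site $i$ and a finite sequence of replacement events, each of positive probability, such that if these events occur consecutively (from any initial state) every site ends up carrying the type initially at site $i$. Define $e_{ij}=\sum_{(R,\alpha):\, j\in R,\ \alpha(j)=i}p(R,\alpha)$, $b_i=\sum_j e_{ij}$, $d_i=\sum_j e_{ji}$, $B=\sum_{i,j}e_{ij}$. The site-specific fixation probability $\rho_i$ is the probability that the chain started from the state with M at site $i$ and R elsewhere is eventually absorbed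 in $(\mathrm{M},\ldots,\mathrm{M})$. *)

(* Defs.v *)
From HB Require Import structures.
From mathcomp Require Import all_boot all_order all_algebra.
From mathcomp Require Import all_classical all_reals all_analysis.
Set Implicit Arguments. Unset Strict Implicit. Unset Printing Implicit Defensive.
Import Order.TTheory GRing.Theory Num.Theory.
Import numFieldNormedType.Exports.
Local Open Scope ring_scope.

(* A replacement event (R, alpha) on sites 'I_N is encoded as a finite function
   f : 'I_N -> option 'I_N with  R = {j | f j <> None}  and  alpha j = a  iff
   f j = Some a. *)
Definition event (N : nat) := {ffun 'I_N -> option 'I_N}.
(* A state: true = M (mutant), false = R (resident). *)
Definition state (N : nat) := {ffun 'I_N -> bool}.

Definition apply_event (N : nat) (e : event N) (s : state N) : state N :=
  [ffun j => if e j is Some a then s a else s j].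

Section Model.
Variables (R : realType) (N : nat) (p : event N -> R).

Definition is_replacement_rule : Prop :=
  (forall e, 0 <= p e) /\ \sum_(e : event N) p e = 1.

Definition fixation_assumption : Prop :=
  exists (i : 'I_N) (es : seq (event N)),
    (forall e, e \in es -> 0 < p e) /\
    forall (s : state N) (j : 'I_N),
      (foldl (fun s e => apply_event e s) s es) j = s i.

Definition e_rate (i j : 'I_N) : R := \sum_(ev : event N | ev j == Some i) p ev.
Definition birth (i : 'I_N) : R := \sum_(j < N) e_rate i j.
Definition death (i : 'I_N) : R := \sum_(j < N) e_rate j i.
Definition Btot : R := \sum_(i < N) \sum_(j < N) e_rate i j.

Definition trans (s s' : state N) : R :=
  \sum_(ev : event N | apply_event ev s == s') p ev.

Fixpoint distn (s0 : state N) (t : nat) : state N -> R :=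
  match t with
  | 0 => fun s => (s == s0)%:R
  | t.+1 => fun s' => \sum_(s : state N) distn s0 t s * trans s s'
  end.

Definition allM : state N := [ffun _ => true].
Definition single (i : 'I_N) : state N := [ffun j => j == i].

(* site-specific fixation probability: probability of eventual absorption in
   allM (absorbing), i.e. the limit of P(X_t = allM) started from single i *)
Definition rho_site (i : 'I_N) : R := limn (fun t => distn (single i) t allM).

Definition rho_overall : R := Btot^-1 * \sum_(i < N) death i * rho_site i.

Definition Krate (u : R) : R := N%:R * u * rho_overall.
End Model.

(* Main.v *)
Require Import Defs.
From HB Require Import structures.
From mathcomp Require Import all_boot all_order all_algebra.
From mathcomp Require Import all_classical all_reals all_analysis.
From mathcomp Require Import lra.
Import Order.TTheory GRing.Theory Num.Theory.
Import numFieldNormedType.Exports.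
Local Open Scope ring_scope.
Local Open Scope classical_set_scope.
Set Implicit Arguments. Unset Strict Implicit. Unset Printing Implicit Defensive.

Section Markov.
Variables (R : realType) (N : nat) (p : event N -> R).
Hypothesis p_ge0 : forall e, 0 <= p e.
Hypothesis p_sum1 : \sum_(e : event N) p e = 1.

Definition map := {ffun 'I_N -> 'I_N}.
Definition gev (e : event N) : map := [ffun j => if e j is Some a then a else j].
Definition fcomp (A B : map) : map := [ffun j => A (B j)].
Definition scomp (s : state N) (A : map) : state N := [ffun j => s (A j)].
Definition idm : map := [ffun j => j].
Definition cst (i : 'I_N) : map := [ffun _ => i].

Lemma fcompA A B C : fcomp (fcomp A B) C = fcomp A (fcomp B C).
Proof. by apply/ffunP => j; rewrite !ffunE. Qed.
Lemma fcomp1m A : fcomp idm A = A.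
Proof. by apply/ffunP => j; rewrite !ffunE. Qed.
Lemma fcompm1 A : fcomp A idm = A.
Proof. by apply/ffunP => j; rewrite !ffunE. Qed.
Lemma scompA s A B : scomp (scomp s A) B = scomp s (fcomp A B).
Proof. by apply/ffunP => j; rewrite !ffunE. Qed.
Lemma apply_eventE e s : apply_event e s = scomp s (gev e).
Proof. by apply/ffunP => j; rewrite !ffunE; case: (e j). Qed.

Lemma sum_collapse (T : finType) (F : T -> R) (y : T) :
  \sum_x F x * (y == x)%:R = F y.
Proof.
rewrite (bigD1 y) //= eqxx mulr1 big1 ?addr0 // => x /negbTE.
by rewrite eq_sym => ->; rewrite mulr0.
Qed.

Definition mu (G : map) : R := \sum_(e | gev e == G) p e.

Lemma sum_mu (F : map -> R) : \sum_G mu G * F G = \sum_e p e * F (gev e).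
Proof.
under eq_bigr => G _ do rewrite /mu big_distrl /= big_mkcond /=.
rewrite exchange_big /=; apply: eq_bigr => e _.
rewrite -big_mkcond /=.
by rewrite (big_pred1 (gev e)) // => G; rewrite eq_sym.
Qed.

Lemma mu_ge0 G : 0 <= mu G.
Proof. by apply: sumr_ge0 => e _. Qed.

Lemma mu_sum1 : \sum_G mu G = 1.
Proof.
rewrite -p_sum1; have := sum_mu (fun _ => 1).
under eq_bigr => G _ do rewrite mulr1.
by move=> ->; apply: eq_bigr => e _; rewrite mulr1.
Qed.

Definition conv (P1 P2 : map -> R) (C : map) : R :=
  \sum_A \sum_B P1 A * P2 B * (fcomp A B == C)%:R.

Definition delta (A : map) : R := (A == idm)%:R.

Lemma conv_deltal P : conv delta P = P.
Proof.
apply: funext => C; rewrite /conv (bigD1 idm) //= [X in _ + X]big1 ?addr0.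
  rewrite /delta /= eqxx.
  under eq_bigr => B _ do rewrite fcomp1m mul1r.
  by rewrite -(sum_collapse P C); apply: eq_bigr => B _; rewrite eq_sym.
move=> A /negbTE HA; apply: big1 => B _; by rewrite /delta HA !mul0r.
Qed.

Lemma conv_deltar P : conv P delta = P.
Proof.
apply: funext => C; rewrite /conv.
rewrite -(sum_collapse P C); apply: eq_bigr => A _.
rewrite (bigD1 idm) //= [X in _ + X]big1 ?addr0.
  by rewrite /delta eqxx mulr1 fcompm1 eq_sym.
move=> B /negbTE HB; by rewrite /delta HB mulr0 mul0r.
Qed.

Lemma conv_assoc P1 P2 P3 : conv (conv P1 P2) P3 = conv P1 (conv P2 P3).
Proof.
apply: funext => D; rewrite /conv.
transitivity (\sum_A \sum_B \sum_E P1 A * P2 B * P3 E * (fcomp (fcomp A B) E == D)%:R).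
  transitivity (\sum_C \sum_E \sum_A \sum_B P1 A * P2 B * P3 E * (fcomp A B == C)%:R * (fcomp C E == D)%:R).
    apply: eq_bigr => C _; apply: eq_bigr => E _.
    rewrite !big_distrl /=; apply: eq_bigr => A _.
    rewrite !big_distrl /=; apply: eq_bigr => B _.
    by rewrite [_ * P3 E]mulrAC.
  rewrite exchange_big /=; under eq_bigr => E _ do rewrite exchange_big /=.
  rewrite exchange_big /=; apply: eq_bigr => A _.
  under eq_bigr => E _ do rewrite exchange_big /=.
  rewrite exchange_big /=; apply: eq_bigr => B _.
  apply: eq_bigr => E _.
  rewrite -(sum_collapse (fun C => P1 A * P2 B * P3 E * (fcomp C E == D)%:R) (fcomp A B)).
  by apply: eq_bigr => C _; rewrite mulrAC.
apply: eq_bigr => A _.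
transitivity (\sum_F \sum_B \sum_E P1 A * P2 B * P3 E * (fcomp B E == F)%:R * (fcomp A F == D)%:R); last first.
  apply: eq_bigr => F _; rewrite big_distrr big_distrl /=; apply: eq_bigr => B _.
  rewrite big_distrr big_distrl /=; apply: eq_bigr => E _.
  by rewrite !mulrA.
rewrite [RHS]exchange_big /=; apply: eq_bigr => B _.
rewrite [RHS]exchange_big /=; apply: eq_bigr => E _.
rewrite fcompA -(sum_collapse (fun F => P1 A * P2 B * P3 E * (fcomp A F == D)%:R) (fcomp B E)).
by apply: eq_bigr => F _; rewrite mulrAC.
Qed.

Definition Q (t : nat) : map -> R := iter t (fun P => conv P mu) delta.

Lemma QS t : Q t.+1 = conv (Q t) mu. Proof. by []. Qed.

Lemma Q_comm t : conv (Q t) mu = conv mu (Q t).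
Proof.
elim: t => [|t IH]; first by rewrite /= conv_deltal conv_deltar.
by rewrite QS IH conv_assoc -IH.
Qed.

Lemma conv_ge0 P1 P2 : (forall A, 0 <= P1 A) -> (forall A, 0 <= P2 A) ->
  forall C, 0 <= conv P1 P2 C.
Proof.
move=> h1 h2 C; apply: sumr_ge0 => A _; apply: sumr_ge0 => B _.
by rewrite !mulr_ge0.
Qed.

Lemma conv_sum P1 P2 : \sum_C conv P1 P2 C = (\sum_A P1 A) * (\sum_B P2 B).
Proof.
rewrite /conv exchange_big /= big_distrl /=; apply: eq_bigr => A _.
rewrite exchange_big /= big_distrr /=; apply: eq_bigr => B _.
by rewrite (sum_collapse (fun _ => P1 A * P2 B)).
Qed.

Lemma Q_ge0 t A : 0 <= Q t A.
Proof.
elim: t A => [|t IH] A; first by rewrite /= /delta ler0n.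
by rewrite QS; apply: conv_ge0 => // G; apply: mu_ge0.
Qed.

Lemma Q_sum1 t : \sum_A Q t A = 1.
Proof.
elim: t => [|t IH].
  by rewrite /= /delta (bigD1 idm) //= eqxx big1 ?addr0 // => A /negbTE ->.
by rewrite QS conv_sum IH mu_sum1 mulr1.
Qed.

Lemma transE s s' : trans p s s' = \sum_G mu G * (scomp s G == s')%:R.
Proof.
rewrite sum_mu /trans big_mkcond /=; apply: eq_bigr => e _.
by rewrite apply_eventE; case: ifP; rewrite ?mulr1 ?mulr0.
Qed.

Lemma distnQ s0 t s : distn p s0 t s = \sum_A Q t A * (scomp s0 A == s)%:R.
Proof.
elim: t s => [|t IH] s /=.
  rewrite /delta.
  have H : scomp s0 idm = s0 by apply/ffunP => j; rewrite !ffunE.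
  transitivity ((scomp s0 idm == s)%:R : R); first by rewrite H eq_sym.
  rewrite -(sum_collapse (fun A => (scomp s0 A == s)%:R) idm).
  by apply: eq_bigr => A _; rewrite mulrC eq_sym.
transitivity (\sum_s1 (\sum_A Q t A * (scomp s0 A == s1)%:R) * trans p s1 s).
  by apply: eq_bigr => s1 _; rewrite -IH.
under [LHS]eq_bigr => s1 _ do rewrite big_distrl /=.
rewrite [LHS]exchange_big /=.
transitivity (\sum_A \sum_G Q t A * mu G * (scomp s0 (fcomp A G) == s)%:R).
  apply: eq_bigr => A _.
  transitivity (Q t A * trans p (scomp s0 A) s).
    rewrite -(sum_collapse (fun s1 => Q t A * trans p s1 s) (scomp s0 A)).
    by apply: eq_bigr => s1 _; rewrite mulrAC eq_sym.
  rewrite transE big_distrr; apply: eq_bigr => G _.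
  by rewrite /= scompA mulrA.
rewrite ?QS /conv.
under [RHS]eq_bigr => C _ do rewrite big_distrl /=.
rewrite [RHS]exchange_big /=; apply: eq_bigr => A _.
under [RHS]eq_bigr => C _ do rewrite big_distrl /=.
rewrite [RHS]exchange_big /=; apply: eq_bigr => G _.
rewrite -(sum_collapse (fun C => Q t A * mu G * (scomp s0 C == s)%:R) (fcomp A G)).
by apply: eq_bigr => C _; rewrite mulrAC.
Qed.

Definition isconst (A : map) := [exists i, A == cst i].
Definition fnc (A : map) : R := (~~ isconst A)%:R.
Definition c t i := Q t (cst i).
Definition U t := \sum_A Q t A * fnc A.

Lemma cst_inj i j : cst i = cst j -> i = j.
Proof. by move/ffunP/(_ i); rewrite !ffunE. Qed.

Lemma distn_single i t : distn p (single i) t (allM N) = c t i.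
Proof.
rewrite distnQ /c -(sum_collapse (Q t) (cst i)); apply: eq_bigr => A _.
have -> : (scomp (single i) A == allM N) = (A == cst i).
  apply/eqP/eqP => [H|->].
    apply/ffunP => j; move/ffunP/(_ j): H; rewrite !ffunE.
    by move/eqP.
  by apply/ffunP => j; rewrite !ffunE eqxx.
by rewrite eq_sym.
Qed.

Lemma decomp1 A : \sum_i (A == cst i)%:R + fnc A = 1 :> R.
Proof.
rewrite /fnc /isconst; case: existsP => [[i /eqP ->]|H] /=.
  rewrite (bigD1 i) //= eqxx big1 ?addr0 // => j /negbTE Hj.
  by case: eqP => // /cst_inj E; rewrite E eqxx in Hj.
rewrite big1 ?add0r // => i _; case: eqP => // E; case: H; exists i; exact/eqP.
Qed.

Lemma fnc_ge0 A : 0 <= fnc A. Proof. exact: ler0n. Qed.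
Lemma fnc_le1 A : fnc A <= 1. Proof. by rewrite /fnc; case: (~~ _). Qed.

Lemma c_U t : \sum_i c t i + U t = 1.
Proof.
rewrite -(Q_sum1 t) /U /c.
transitivity (\sum_A Q t A * (\sum_i (A == cst i)%:R + fnc A)); last first.
  by apply: eq_bigr => A _; rewrite decomp1 mulr1.
under [RHS]eq_bigr => A _ do rewrite mulrDr big_distrr /=.
rewrite big_split /=; congr (_ + _).
rewrite exchange_big /=; apply: eq_bigr => i _.
rewrite -(sum_collapse (Q t) (cst i)); apply: eq_bigr => A _.
by rewrite eq_sym.
Qed.

Lemma c_ge0 t i : 0 <= c t i. Proof. exact: Q_ge0. Qed.
Lemma U_ge0 t : 0 <= U t.
Proof. by apply: sumr_ge0 => A _; rewrite mulr_ge0 ?Q_ge0 ?fnc_ge0. Qed.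

Lemma fcomp_cst i G : fcomp (cst i) G = cst i.
Proof. by apply/ffunP => j; rewrite !ffunE. Qed.

Lemma c_mono t i : c t i <= c t.+1 i.
Proof.
rewrite /c QS /conv (bigD1 (cst i)) //=.
have -> : \sum_G Q t (cst i) * mu G * (fcomp (cst i) G == cst i)%:R = Q t (cst i).
  under eq_bigr => G _ do rewrite fcomp_cst eqxx mulr1.
  by rewrite -big_distrr /= mu_sum1 mulr1.
rewrite lerDl.
by apply: sumr_ge0 => A _; apply: sumr_ge0 => G _; rewrite !mulr_ge0 ?Q_ge0 ?mu_ge0.
Qed.

Lemma decomp2 (G A : map) i :
  (fcomp G A == cst i)%:R =
  \sum_k (A == cst k)%:R * (G k == i)%:R + fnc A * (fcomp G A == cst i)%:R :> R.
Proof.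
rewrite /fnc /isconst; case: existsP => [[k0 /eqP ->]|H] /=.
  rewrite mul0r addr0 (bigD1 k0) //= eqxx mul1r big1 ?addr0.
    have -> : (fcomp G (cst k0) == cst i) = (G k0 == i); last by [].
    apply/eqP/eqP => [/ffunP/(_ k0)|H0].
      by rewrite !ffunE.
    by apply/ffunP => j; rewrite !ffunE.
  move=> k /negbTE Hk; case: eqP; rewrite ?mul0r // => /cst_inj E.
  by rewrite E eqxx in Hk.
rewrite mul1r big1 ?add0r // => k _; case: eqP; rewrite ?mul0r // => E.
by case: H; exists k; apply/eqP.
Qed.

Definition rem t i := \sum_G mu G * \sum_A Q t A * fnc A * (fcomp G A == cst i)%:R.

Lemma c_step t i :
  c t.+1 i = \sum_G mu G * (\sum_k (G k == i)%:R * c t k) + rem t i.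
Proof.
rewrite /c QS Q_comm /conv /rem -big_split /=; apply: eq_bigr => G _.
transitivity (mu G * \sum_A Q t A * (fcomp G A == cst i)%:R).
  by rewrite big_distrr /=; apply: eq_bigr => A _; rewrite mulrA.
rewrite -mulrDr; congr (_ * _).
under [LHS]eq_bigr => A _ do rewrite decomp2 mulrDr big_distrr /=.
rewrite big_split /=; congr (_ + _); last first.
  by apply: eq_bigr => A _; rewrite mulrA.
rewrite exchange_big /=; apply: eq_bigr => k _.
rewrite -(sum_collapse (Q t) (cst k)) big_distrr /=; apply: eq_bigr => A _.
by rewrite [cst k == A]eq_sym [RHS]mulrC -mulrA.
Qed.

Lemma rem_ge0 t i : 0 <= rem t i.
Proof.
apply: sumr_ge0 => G _; rewrite mulr_ge0 ?mu_ge0 //.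
by apply: sumr_ge0 => A _; rewrite !mulr_ge0 ?Q_ge0 ?fnc_ge0 ?ler0n.
Qed.

Lemma rem_le t i : rem t i <= U t.
Proof.
have -> : U t = \sum_G mu G * U t by rewrite -big_distrl /= mu_sum1 mul1r.
rewrite /rem.
apply: ler_sum => G _; apply: ler_wpM2l; first exact: mu_ge0.
apply: ler_sum => A _; rewrite -[X in _ <= X]mulr1 ler_wpM2l //.
  by rewrite mulr_ge0 ?Q_ge0 ?fnc_ge0.
by case: (_ == _).
Qed.

Definition Kop (f : map -> R) (A : map) : R := \sum_G mu G * f (fcomp A G).

Lemma Q_K t f : \sum_A Q t.+1 A * f A = \sum_A Q t A * Kop f A.
Proof.
rewrite QS /conv /Kop.
under eq_bigr => C _ do rewrite big_distrl /=.
rewrite exchange_big /=; apply: eq_bigr => A _.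
under eq_bigr => C _ do rewrite big_distrl /=.
rewrite exchange_big /= big_distrr /=; apply: eq_bigr => G _.
rewrite mulrA -(sum_collapse (fun C => Q t A * mu G * f C) (fcomp A G)).
by apply: eq_bigr => C _; rewrite mulrAC.
Qed.

Lemma Q_iter t L f : \sum_A Q (t + L) A * f A = \sum_A Q t A * iter L Kop f A.
Proof.
elim: L f => [|L IH] f; first by rewrite addn0.
by rewrite addnS Q_K IH iterSr.
Qed.

Lemma K_bounds f : (forall A, 0 <= f A <= 1) -> forall A, 0 <= Kop f A <= 1.
Proof.
move=> hf A; apply/andP; split.
  by apply: sumr_ge0 => G _; rewrite mulr_ge0 ?mu_ge0 //; case/andP: (hf (fcomp A G)).
rewrite -mu_sum1; apply: ler_sum => G _.
rewrite -[X in _ <= X]mulr1 ler_wpM2l ?mu_ge0 //.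
by case/andP: (hf (fcomp A G)).
Qed.

Lemma iter_bounds n f : (forall A, 0 <= f A <= 1) -> forall A, 0 <= iter n Kop f A <= 1.
Proof.
move=> hf; elim: n => [|n IH] //=; exact: K_bounds.
Qed.

Lemma isconst_comp A G : isconst A -> isconst (fcomp A G).
Proof.
case/existsP => i /eqP ->; apply/existsP; exists i; by rewrite fcomp_cst.
Qed.

Lemma iter_const n A : isconst A -> iter n Kop fnc A = 0.
Proof.
elim: n A => [|n IH] A HA /=; first by rewrite /fnc HA.
rewrite /Kop big1 // => G _; by rewrite IH ?mulr0 // isconst_comp.
Qed.

Lemma mu_ge_p e : p e <= mu (gev e).
Proof.
rewrite /mu (bigD1 e) //= lerDl; apply: sumr_ge0 => e' _; exact: p_ge0.
Qed.

Definition Fc (A : map) (e : event N) := fcomp A (gev e).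
Definition comp (es : seq (event N)) := foldl Fc idm es.

Lemma foldl_fcomp_gen A B es : foldl Fc (fcomp A B) es = fcomp A (foldl Fc B es).
Proof.
elim: es B => [|e es IH] B //=.
by rewrite /Fc fcompA -IH.
Qed.

Lemma foldl_fcomp A es : foldl Fc A es = fcomp A (comp es).
Proof. by rewrite /comp -foldl_fcomp_gen fcompm1. Qed.

Lemma comp_cons e es : comp (e :: es) = fcomp (gev e) (comp es).
Proof. by rewrite /comp /= /Fc fcomp1m foldl_fcomp. Qed.

Lemma K_le f A G0 : (forall A, f A <= 1) ->
  Kop f A <= 1 - mu G0 * (1 - f (fcomp A G0)).
Proof.
move=> hf; rewrite /Kop.
have -> : \sum_G mu G * f (fcomp A G) = 1 - \sum_G mu G * (1 - f (fcomp A G)).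
  rewrite -{1}mu_sum1 -sumrB; apply: eq_bigr => G _; by rewrite mulrBr mulr1 opprB addrC subrK.
rewrite lerD2l lerN2 (bigD1 G0) //= lerDl.
by apply: sumr_ge0 => G _; rewrite mulr_ge0 ?mu_ge0 // subr_ge0.
Qed.

Lemma iter_bound f es : (forall A, 0 <= f A <= 1) -> (forall e, e \in es -> 0 <= p e) ->
  forall A, iter (size es) Kop f A <= 1 - (\prod_(e <- es) p e) * (1 - f (fcomp A (comp es))).
Proof.
move=> hf; elim: es => [|e es IH] hp A /=.
  by rewrite big_nil mul1r /comp /= fcompm1 subKr.
have hf1 : forall A, iter (size es) Kop f A <= 1 by move=> B; case/andP: (iter_bounds (size es) hf B).
apply: le_trans (K_le _ (gev e) hf1) _.
rewrite lerD2l lerN2 big_cons -mulrA.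
have hpe : 0 <= p e by apply: hp; rewrite inE eqxx.
apply: le_trans (ler_wpM2r _ (mu_ge_p e)); last by rewrite subr_ge0.
rewrite ler_wpM2l //.
have := IH (fun e' _ => p_ge0 e') (fcomp A (gev e)).
rewrite comp_cons fcompA => H; lra.
Qed.

Lemma fnc_bounds A : 0 <= fnc A <= 1.
Proof. by rewrite fnc_ge0 fnc_le1. Qed.


Lemma U_contract t es i0 : comp es = cst i0 ->
  U (t + size es) <= (1 - \prod_(e <- es) p e) * U t.
Proof.
move=> hc; rewrite /U Q_iter big_distrr /=; apply: ler_sum => A _.
rewrite mulrCA; apply: ler_wpM2l; first exact: Q_ge0.
case: (boolP (isconst A)) => HA.
  by rewrite iter_const // /fnc HA mulr0.
have : fnc A = 1 by rewrite /fnc HA.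
move=> ->; rewrite mulr1.
apply: le_trans (iter_bound fnc_bounds (fun e _ => p_ge0 e) A) _.
have -> : fnc (fcomp A (comp es)) = 0.
  have H : isconst (fcomp A (comp es)).
    by rewrite hc; apply/existsP; exists (A i0); apply/eqP/ffunP => j; rewrite !ffunE.
  by rewrite /fnc H.
by rewrite subr0 mulr1.
Qed.

Lemma U_nonincr t : U t.+1 <= U t.
Proof.
have := c_U t.+1; have := c_U t.
have : \sum_i c t i <= \sum_i c t.+1 i by apply: ler_sum => i _; apply: c_mono.
move=> H1 H2 H3; lra.
Qed.

Lemma cvg_sumR (I : Type) (r : seq I) (f : I -> nat -> R) (l : I -> R) :
  (forall i, f i @ \oo --> l i) ->
  (fun t => \sum_(i <- r) f i t) @ \oo --> \sum_(i <- r) l i.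
Proof.
move=> hf; elim: r => [|i r IH].
  rewrite big_nil; under eq_fun => t do rewrite big_nil; exact: cvg_cst.
rewrite big_cons; under eq_fun => t do rewrite big_cons.
exact: cvgD.
Qed.

Definition rho i := limn (fun t => c t i).

Lemma c_cvg i : (fun t => c t i) @ \oo --> rho i.
Proof.
have H : (fun t => c t i) @ \oo --> sup (range (fun t => c t i)).
  apply: nondecreasing_cvgn.
    by apply/nondecreasing_seqP => t; apply: c_mono.
  exists 1 => _ [t _ <-].
  have := c_U t; have := U_ge0 t.
  have : c t i <= \sum_j c t j.
    by rewrite (bigD1 i) //= lerDl; apply: sumr_ge0 => j _; apply: c_ge0.
  move=> ? ? ?; lra.
by rewrite /rho (cvg_lim _ H).
Qed.

Lemma rho_siteE i : rho_site p i = rho i.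
Proof.
rewrite /rho_site /rho.
have -> : (fun t => distn p (single i) t (allM N)) = (fun t => c t i) by apply: funext => t; exact: distn_single.
by [].
Qed.

Lemma rho_ge0 i : 0 <= rho i.
Proof.
apply: (@ler_cvg_to _ \oo _ _ (fun _ => 0) (fun t => c t i)).
- exact: cvg_cst.
- exact: c_cvg.
- by apply: nearW => t; exact: c_ge0.
Qed.

Lemma U_cvg : U @ \oo --> 1 - \sum_i rho i.
Proof.
have -> : U = fun t => 1 - \sum_i c t i.
  by apply: funext => t; have := c_U t; lra.
apply: cvgB; first exact: cvg_cst.
by apply: cvg_sumR => i; exact: c_cvg.
Qed.

Lemma rho_sum1 es i0 : comp es = cst i0 -> (forall e, e \in es -> 0 < p e) ->
  \sum_i rho i = 1.
Proof.
move=> hc hp.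
set l := 1 - \sum_i rho i.
set d := \prod_(e <- es) p e.
have d_gt0 : 0 < d by rewrite /d big_seq; apply: prodr_gt0 => e /hp.
have Hs : (fun t => U (t + size es)) @ \oo --> l.
  have := U_cvg; rewrite -(cvg_shiftn (size es)); exact.
have H1 : l <= (1 - d) * l.
  apply: (@ler_cvg_to _ \oo _ _ (fun t => U (t + size es)) (fun t => (1 - d) * U t)).
  - exact: Hs.
  - exact: cvgMl_tmp U_cvg.
  - by apply: nearW => t; exact: U_contract hc.
have H2 : 0 <= l.
  apply: (@ler_cvg_to _ \oo _ _ (fun _ => 0) U).
  - exact: cvg_cst.
  - exact: U_cvg.
  - by apply: nearW => t; exact: U_ge0.
have H3 : d * l <= 0.
  by move: H1; rewrite mulrBl mul1r -[X in X <= _]subr0 lerD2l lerN2.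
have H4 : l <= 0 by rewrite -(pmulr_rle0 _ d_gt0).
have : l = 0 by apply: le_anti; rewrite H4 H2.
by rewrite /l => /eqP; rewrite subr_eq0 => /eqP <-.
Qed.

Lemma e_rateE i k : e_rate p i k = \sum_e p e * (e k == Some i)%:R.
Proof.
rewrite /e_rate big_mkcond /=; apply: eq_bigr => e _.
by case: ifP; rewrite ?mulr1 ?mulr0.
Qed.

Lemma e_rate_ge0 i k : 0 <= e_rate p i k.
Proof. by apply: sumr_ge0 => e _. Qed.

Lemma sum_p_none k : \sum_e p e * (e k == None)%:R = 1 - death p k.
Proof.
have -> : (1 : R) - death p k = \sum_e p e - death p k by rewrite p_sum1.
rewrite /death.
under [X in _ - X]eq_bigr => j _ do rewrite e_rateE.
rewrite exchange_big /= -sumrB; apply: eq_bigr => e _.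
rewrite -big_distrr /= -[X in _ = X - _]mulr1 -mulrBr; congr (_ * _).
case: (e k) => [a|] /=.
  rewrite (bigD1 a) //= eqxx [X in _ - (_ + X)]big1 ?addr0 ?subrr //.
  move=> j /negbTE hj; apply/eqP; rewrite pnatr_eq0 eqb0.
  by apply/negP => /eqP [] E; rewrite E eqxx in hj.
by rewrite big1 ?subr0.
Qed.

Lemma gev_ind e k i : ((gev e k == i)%:R : R) =
  (e k == Some i)%:R + (k == i)%:R * (e k == None)%:R.
Proof.
rewrite /gev ffunE; case: (e k) => [a|] /=.
  by rewrite mulr0 addr0.
by rewrite mulr1 add0r.
Qed.

Lemma harm_events (r : 'I_N -> R) i :
  \sum_G mu G * (\sum_k (G k == i)%:R * r k) =
  \sum_k e_rate p i k * r k + (1 - death p i) * r i.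
Proof.
rewrite (sum_mu (fun G => \sum_k (G k == i)%:R * r k)).
under eq_bigr => e _ do rewrite big_distrr /=.
rewrite exchange_big /=.
under eq_bigr => k _ do under eq_bigr => e _ do rewrite gev_ind mulrDl mulrDr.
under eq_bigr => k _ do rewrite big_split /=.
rewrite big_split /=; congr (_ + _).
  apply: eq_bigr => k _; rewrite e_rateE big_distrl /=.
  by apply: eq_bigr => e _; rewrite mulrA.
rewrite (bigD1 i) //= [X in _ + X]big1 ?addr0.
  rewrite -sum_p_none big_distrl /=; apply: eq_bigr => e _.
  by rewrite eqxx mul1r mulrA.
move=> k /negbTE hk; apply: big1 => e _; by rewrite hk !mul0r mulr0.
Qed.

Lemma rho_harm (hsum : \sum_i rho i = 1) i :
  death p i * rho i = \sum_k e_rate p i k * rho k.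
Proof.
have U0 : U @ \oo --> 0 by have := U_cvg; rewrite hsum subrr.
have Hrem : (fun t => rem t i) @ \oo --> 0.
  apply: (@squeeze_cvgr _ \oo _ _ (fun _ => 0) U); last exact: U0; last exact: cvg_cst.
  by apply: nearW => t; rewrite rem_ge0 rem_le.
have Ha : (fun t => c t.+1 i - \sum_G mu G * (\sum_k (G k == i)%:R * c t k)) @ \oo -->
   rho i - \sum_G mu G * (\sum_k (G k == i)%:R * rho k).
  apply: cvgB.
    have := @c_cvg i; rewrite -cvg_shiftS; exact.
  apply: cvg_sumR => G; apply: cvgMl_tmp; apply: cvg_sumR => k.
  apply: cvgMl_tmp; exact: c_cvg.
have E : (fun t => c t.+1 i - \sum_G mu G * (\sum_k (G k == i)%:R * c t k)) =
         (fun t => rem t i).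
  by apply: funext => t; rewrite c_step addrAC subrr add0r.
rewrite E in Ha.
have L1 : limn (fun t => rem t i) = rho i - \sum_G mu G * (\sum_k (G k == i)%:R * rho k).
  by apply: cvg_lim.
have L2 : limn (fun t => rem t i) = 0 by apply: cvg_lim.
move: L1; rewrite L2 harm_events => /esym/eqP; rewrite subr_eq0 => /eqP H.
have -> : death p i * rho i = rho i - (1 - death p i) * rho i.
  by rewrite mulrBl mul1r opprB addrC subrK.
by rewrite [X in X - _]H addrK.
Qed.

Lemma comp_path (P : 'I_N -> Prop) es :
  (forall e, e \in es -> forall k, P k -> P (gev e k)) ->
  forall j, P j -> P (comp es j).
Proof.
elim: es => [|e es IH] hP j Pj.
  by rewrite /comp /= ffunE.
rewrite comp_cons ffunE; apply: (hP e); first by rewrite inE eqxx.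
apply: IH => // e' he'; apply: (hP e'); by rewrite inE he' orbT.
Qed.

Lemma foldl_apply s A es :
  foldl (fun s e => apply_event e s) (scomp s A) es = scomp s (foldl Fc A es).
Proof.
elim: es A => [|e es IH] A //=.
by rewrite apply_eventE scompA IH.
Qed.

Lemma fixation_comp : fixation_assumption p ->
  exists i0 es, (forall e, e \in es -> 0 < p e) /\ comp es = cst i0.
Proof.
case=> i0 [es [hp hf]]; exists i0, es; split => //.
apply/ffunP => j; rewrite ffunE.
have := hf [ffun k => k == i0] j.
have -> : [ffun k => k == i0] = scomp [ffun k => k == i0] idm.
  by apply/ffunP => k; rewrite !ffunE.
rewrite foldl_apply -/(comp es) !ffunE eqxx.
by move/eqP.
Qed.

Lemma e_rate_ge_p (e : event N) (k a : 'I_N) : e k = Some a -> p e <= e_rate p a k.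
Proof.
move=> hk; rewrite /e_rate (bigD1 e) /=; last by rewrite hk.
by rewrite lerDl; apply: sumr_ge0.
Qed.

End Markov.

Section Ineq.
Variables (R : realType) (N : nat) (e : 'I_N -> 'I_N -> R) (r : 'I_N -> R) (b : R).
Hypothesis e_ge0 : forall i k, 0 <= e i k.
Hypothesis r_ge0 : forall i, 0 <= r i.
Hypothesis r_sum1 : \sum_i r i = 1.
Let d i := \sum_j e j i.
Hypothesis harm : forall i, d i * r i = \sum_k e i k * r k.
Hypothesis bconst : forall i, \sum_k e i k = b.

Definition term i k := e i k * r i - e i k * r k * (1 + ln (r i) - ln (r k)).

Lemma r_pos i k : 0 < e i k -> 0 < r k -> 0 < r i.
Proof.
move=> he hr; rewrite lt_neqAle r_ge0 andbT; apply/negP => /eqP ri0.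
have : 0 < \sum_j e i j * r j.
  rewrite (bigD1 k) //=; apply: ltr_wpDr; last by rewrite mulr_gt0.
  by apply: sumr_ge0 => j _; rewrite mulr_ge0.
by rewrite -harm -ri0 mulr0 ltxx.
Qed.

Lemma term_ge0 i k : 0 <= term i k.
Proof.
rewrite /term subr_ge0.
have [he|he] : e i k = 0 \/ 0 < e i k.
  by case: (ltgtP 0 (e i k)) (e_ge0 i k) => //; [right|left].
  by rewrite he !mul0r.
have [hr|hr] : r k = 0 \/ 0 < r k.
  by case: (ltgtP 0 (r k)) (r_ge0 k) => //; [right|left].
  by rewrite hr mulr0 mul0r mulr_ge0.
have hri := r_pos he hr.
rewrite -mulrA ler_wpM2l ?(ltW he) //.
have hx : r i = r k * expR (ln (r i) - ln (r k)).
  by rewrite expRB !lnK ?posrE // mulrCA divff ?mulr1 // gt_eqF.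
rewrite [X in _ <= X]hx ler_wpM2l ?(ltW hr) // -addrA.
exact: expR_ge1Dx.
Qed.

Lemma sum_term : \sum_i \sum_k term i k = b - \sum_i d i * r i.
Proof.
rewrite /term.
under eq_bigr => i _ do rewrite sumrB.
rewrite sumrB; congr (_ - _).
  transitivity (\sum_i b * r i); last by rewrite -big_distrr /= r_sum1 mulr1.
  by apply: eq_bigr => i _; rewrite -(bconst i) big_distrl.
have E1 : forall i k, e i k * r k * (1 + ln (r i) - ln (r k)) =
   e i k * r k + e i k * r k * ln (r i) - e i k * r k * ln (r k).
  by move=> i k; rewrite mulrBr mulrDr mulr1.
under eq_bigr => i _ do under eq_bigr => k _ do rewrite E1.
under eq_bigr => i _ do rewrite sumrB big_split /=.
rewrite sumrB big_split /=.
have -> : \sum_i \sum_k e i k * r k * ln (r i) = \sum_i d i * r i * ln (r i).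
  by apply: eq_bigr => i _; rewrite -big_distrl /= harm.
have -> : \sum_i \sum_k e i k * r k * ln (r k) = \sum_k d k * r k * ln (r k).
  rewrite exchange_big /=; apply: eq_bigr => k _.
  by rewrite /d !big_distrl.
have -> : \sum_i \sum_k e i k * r k = \sum_k d k * r k.
  rewrite exchange_big /=; apply: eq_bigr => k _.
  by rewrite /d big_distrl.
by rewrite addrK.
Qed.

Lemma ineq : \sum_i d i * r i <= b.
Proof.
rewrite -subr_ge0 -sum_term; apply: sumr_ge0 => i _; apply: sumr_ge0 => k _.
exact: term_ge0.
Qed.

Lemma eq_case : \sum_i d i * r i = b ->
  forall i k, 0 < e i k -> 0 < r k -> r i = r k.
Proof.
move=> hb i k he hr.
have hsum : \sum_i \sum_k term i k = 0 by rewrite sum_term hb subrr.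
have ht : term i k = 0.
  move/eqP: hsum; rewrite psumr_eq0 => [/allP/(_ i (mem_index_enum _))|].
    rewrite implyTb => /eqP/eqP; rewrite psumr_eq0 => [/allP/(_ k (mem_index_enum _))|].
      by rewrite implyTb => /eqP.
    by move=> j _; exact: term_ge0.
  by move=> j _; apply: sumr_ge0 => l _; exact: term_ge0.
have hri := r_pos he hr.
set x := ln (r i) - ln (r k).
have hx : r i = r k * expR x.
  by rewrite /x expRB !lnK ?posrE // mulrCA divff ?mulr1 // gt_eqF.
move: ht; rewrite /term -/x.
rewrite -mulrA -mulrBr => /eqP; rewrite mulf_eq0 gt_eqF //= => /eqP.
rewrite [X in X - _]hx -addrA -/x -mulrBr => /eqP; rewrite mulf_eq0 gt_eqF //= subr_eq0.
have [x0|xn0] := eqVneq x 0.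
  move=> _; move: x0; rewrite /x => E; apply: ln_inj; rewrite ?posrE //.
  by apply/eqP; rewrite -subr_eq0 E.

by rewrite gt_eqF // expR_gt1Dx.
Qed.
End Ineq.

Theorem mainTheorem3 (R : realType) (N : nat) (p : event N -> R) (u : R) :
  is_replacement_rule p ->
  fixation_assumption p ->
  0 < Btot p ->
  0 < u ->
  (forall i j : 'I_N, birth p i = birth p j) ->
  [/\ rho_overall p <= N%:R^-1,
      Krate p u <= u,
      rho_overall p = N%:R^-1 <-> (forall i j : 'I_N, death p i = death p j)
    & Krate p u = u <-> (forall i j : 'I_N, death p i = death p j)].
Proof.
move=> [p_ge0 p_sum1] hfix hB hu hbirth.
have [i1 _] : exists i : 'I_N, True.
  case: (pickP (fun _ : 'I_N => true)) => [i _|H]; first by exists i.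
  move: hB; rewrite /Btot big_pred0 ?ltxx // => i; exact: H.
have Npos : (0 < N)%N by apply: leq_ltn_trans (ltn_ord i1).
have N0 : 0 < N%:R :> R by rewrite ltr0n.
set b := birth p i1.
have hb : forall i, birth p i = b by move=> i; rewrite /b (hbirth i i1).
have hBtot : Btot p = N%:R * b.
  rewrite /Btot; under eq_bigr => i _ do rewrite -/(birth p i) hb.
  by rewrite sumr_const card_ord mulr_natl.
have b_pos : 0 < b by move: hB; rewrite hBtot pmulr_rgt0.
have [i0 [es [hp hc]]] := fixation_comp hfix.
have hsum := rho_sum1 p_ge0 p_sum1 hc hp.
have hharm := rho_harm p_ge0 p_sum1 hsum.
have rge0 := rho_ge0 p_ge0 p_sum1.
have ege0 : forall i k, 0 <= e_rate p i k by move=> i k; apply: sumr_ge0.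
have hbc : forall i, \sum_k e_rate p i k = b by move=> i; rewrite -(hb i).
set S := \sum_i death p i * rho p i.
have hS : S <= b := ineq ege0 rge0 hsum hharm hbc.
set q := S / b.
have hq : q <= 1 by rewrite /q ler_pdivrMr // mul1r.
have hqeq : (q == 1) = (S == b).
  rewrite /q; apply/eqP/eqP => [H|->]; last by rewrite divff // lt0r_neq0.
  by rewrite -(divfK (lt0r_neq0 b_pos) S) H mul1r.
have hrho : rho_overall p = N%:R^-1 * q.
  rewrite /rho_overall hBtot /q invfM -mulrA; congr (_ * _); rewrite mulrC; congr (_ * _).
  rewrite /S; apply: eq_bigr => i _; by rewrite rho_siteE.
have hK : Krate p u = u * q.
  by rewrite /Krate hrho mulrAC mulrA mulfV ?mul1r ?(lt0r_neq0 N0) // mulrC.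
have hdsum : \sum_i death p i = N%:R * b.
  by rewrite -hBtot /Btot /death exchange_big.
have hSD : S = b <-> (forall i j, death p i = death p j).
  split => [HS|HD]; last first.
    have hd : forall i, death p i = b.
      move=> i; apply: (mulfI (lt0r_neq0 N0)); rewrite -hdsum.
      under eq_bigr => j _ do rewrite (HD j i).
      by rewrite sumr_const card_ord mulr_natl.
    rewrite /S; under eq_bigr => i _ do rewrite hd.
    by rewrite -big_distrr /= hsum mulr1.
  have E := eq_case ege0 rge0 hsum hharm hbc HS.
  have step : forall P : 'I_N -> Prop,
      (forall e, e \in es -> forall k, P k -> P (gev e k)) -> forall j, P j -> P i0.
    by move=> P HP j Pj; have := comp_path HP Pj; rewrite hc ffunE.
  have par : forall e, e \in es -> forall k, gev e k = k \/ 0 < e_rate p (gev e k) k.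
    move=> e he k; rewrite /gev ffunE; case Ek: (e k) => [a|]; last by left.
    by right; apply: lt_le_trans (hp e he) (e_rate_ge_p p_ge0 Ek).
  have step1 : forall j, 0 < rho p j -> rho p i0 = rho p j.
    move=> j hj; apply: (step (fun k => rho p k = rho p j)) => // e he k Pk.
    case: (par e he k) => [->//|hpar].
    by rewrite -Pk; apply: E => //; rewrite Pk.
  set m := rho p i0.
  have [j0 hj0] : exists j, 0 < rho p j.
    case: (pickP (fun j => 0 < rho p j)) => [j hj|H]; first by exists j.
    have : \sum_i rho p i <= 0.
      apply: sumr_le0 => i _; move: (H i) => /negbT; rewrite -leNgt //.
    by rewrite hsum ler10.
  have m_pos : 0 < m by rewrite /m (step1 j0 hj0).
  have vals : forall k, rho p k = 0 \/ rho p k = m.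
    move=> k; have := rge0 k; rewrite le_eqVlt => /orP [/eqP <-|hk]; first by left.
    by right; rewrite /m (step1 k hk).
  have rle : forall k, rho p k <= m by move=> k; case: (vals k) => ->; [exact: ltW | exact: lexx].
  have s3a : forall i, rho p i = m -> death p i <= b.
    move=> i hi; rewrite -(ler_pM2r m_pos) -{1}hi hharm -(hbc i) big_distrl /=.
    by apply: ler_sum => k _; rewrite ler_wpM2l.
  have s3b : forall i, 0 < rho p i -> death p i = b.
    have hz : \sum_i (b - death p i) * rho p i = 0.
      under eq_bigr => i _ do rewrite mulrBl.
      by rewrite sumrB -big_distrr /= hsum mulr1 -/S HS subrr.
    have hnn : forall i, 0 <= (b - death p i) * rho p i.
      move=> i; case: (vals i) => hi; rewrite hi; first by rewrite mulr0.
      by rewrite mulr_ge0 ?subr_ge0 ?(s3a i hi) ?ltW.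
    move=> i hi; move/eqP: hz; rewrite psumr_eq0 => [/allP/(_ i (mem_index_enum _))|j _]; last exact: hnn.
    by rewrite implyTb mulf_eq0 (gt_eqF hi) orbF subr_eq0 => /eqP ->.
  have s3c : forall i, 0 < rho p i -> forall k, 0 < e_rate p i k -> rho p k = m.
    move=> i hi k hk.
    have hz : \sum_k e_rate p i k * (m - rho p k) = 0.
      under eq_bigr => k' _ do rewrite mulrBr.
      rewrite sumrB -hharm -big_distrl /= hbc -(s3b i hi).
      by case: (vals i) hi => ->; rewrite ?ltxx // subrr.
    move/eqP: hz; rewrite psumr_eq0 => [/allP/(_ k (mem_index_enum _))|j _]; last first.
      by rewrite mulr_ge0 ?subr_ge0.
    by rewrite implyTb mulf_eq0 gt_eqF //= subr_eq0 => /eqP <-.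
  have s4 : forall k, 0 < rho p k.
    move=> k; case: (vals k) => [hk|->//].
    have : rho p i0 = 0.
      apply: (step (fun k => rho p k = 0)) hk => e he k' Pk.
      case: (par e he k') => [->//|hpar].
      case: (vals (gev e k')) => // ha.
      have h' : 0 < rho p (gev e k') by rewrite ha.
      have := s3c _ h' k' hpar.
      by rewrite Pk => hm; move: m_pos; rewrite -hm ltxx.
    by move=> h0; move: m_pos; rewrite /m h0 ltxx.
  by move=> i j; rewrite !s3b.
split.
- by rewrite hrho ger_pMr ?invr_gt0.
- by rewrite hK ger_pMr.
- rewrite hrho -hSD; split => [H|H].
    apply/eqP; rewrite -hqeq; apply/eqP; apply: (mulfI (invr_neq0 (lt0r_neq0 N0))).
    by rewrite H mulr1.
  by move/eqP: H; rewrite -hqeq => /eqP ->; rewrite mulr1.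
- rewrite hK -hSD; split => [H|H].
    apply/eqP; rewrite -hqeq; apply/eqP; apply: (mulfI (lt0r_neq0 hu)).
    by rewrite H mulr1.
  by move/eqP: H; rewrite -hqeq => /eqP ->; rewrite mulr1.
Qed.
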